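(* Let $G$ be a second countable locally compact group and $\Omega$ a homogeneous space of $G$. Let $F\subset P$ be closed subgroups of $G$, $Y\subset\Omega$ a compact $F$-minimal subset with $PY=Y$, and $M\subset G$ such that $mY\cap Y\neq\emptyset$ for every $m\in M$. Then $hY=Y$ for every $h\in N_G(F)\cap\overline{PMP}$.
   Context: $N_G(F)$ denotes the normalizer of $F$ in $G$. For a closed subgroup $F\subset G$, a closed $F$-invariant subset $Y\subset\Omega$ is called $F$-minimal if it contains no proper nonempty closed $F$-invariant subset, i.e. $Fy$ is dense in $Y$ for every $y\in Y$. *)

(* Defs.v *)
From Stdlib Require Import List Classical.
Set Implicit Arguments.

Definition subset {X : Type} (A B : X -> Prop) : Prop := forall x, A x -> B x.
Definition set_eq {X : Type} (A B : X -> Prop) : Prop := forall x, A x <-> B x.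

Definition is_topology {X : Type} (op : (X -> Prop) -> Prop) : Prop :=
  (forall U V, set_eq U V -> op U -> op V) /\
  op (fun _ => True) /\
  (forall U V, op U -> op V -> op (fun x => U x /\ V x)) /\
  (forall (I : Type) (U : I -> X -> Prop),
      (forall i, op (U i)) -> op (fun x => exists i, U i x)).

Definition closed {X : Type} (op : (X -> Prop) -> Prop) (A : X -> Prop) : Prop :=
  op (fun x => ~ A x).

Definition closure {X : Type} (op : (X -> Prop) -> Prop) (A : X -> Prop) (x : X) : Prop :=
  forall U, op U -> U x -> exists y, U y /\ A y.

Definition compact {X : Type} (op : (X -> Prop) -> Prop) (K : X -> Prop) : Prop :=
  forall (I : Type) (U : I -> X -> Prop),
    (forall i, op (U i)) -> (forall x, K x -> exists i, U i x) ->
    exists l : list I, forall x, K x -> exists i, In i l /\ U i x.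

Definition hausdorff {X : Type} (op : (X -> Prop) -> Prop) : Prop :=
  forall x y, x <> y -> exists U V, op U /\ op V /\ U x /\ V y /\
    (forall z, ~ (U z /\ V z)).

Definition locally_compact {X : Type} (op : (X -> Prop) -> Prop) : Prop :=
  forall x, exists U K, op U /\ U x /\ subset U K /\ compact op K.

Definition second_countable {X : Type} (op : (X -> Prop) -> Prop) : Prop :=
  exists B : nat -> X -> Prop, (forall n, op (B n)) /\
    (forall U x, op U -> U x -> exists n, B n x /\ subset (B n) U).

Definition continuous {X Y : Type} (opX : (X -> Prop) -> Prop) (opY : (Y -> Prop) -> Prop)
  (f : X -> Y) : Prop :=
  forall V, opY V -> opX (fun x => V (f x)).

Definition prod_open {X Y : Type} (opX : (X -> Prop) -> Prop) (opY : (Y -> Prop) -> Prop)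
  (W : X * Y -> Prop) : Prop :=
  forall p, W p -> exists U V, opX U /\ opY V /\ U (fst p) /\ V (snd p) /\
    (forall q, U (fst q) -> V (snd q) -> W q).

Definition is_group {G : Type} (mul : G -> G -> G) (inv : G -> G) (one : G) : Prop :=
  (forall a b c, mul a (mul b c) = mul (mul a b) c) /\
  (forall a, mul one a = a) /\ (forall a, mul a one = a) /\
  (forall a, mul (inv a) a = one) /\ (forall a, mul a (inv a) = one).

Definition is_topological_group {G : Type} (op : (G -> Prop) -> Prop)
  (mul : G -> G -> G) (inv : G -> G) (one : G) : Prop :=
  is_topology op /\ is_group mul inv one /\
  continuous (prod_open op op) op (fun p => mul (fst p) (snd p)) /\
  continuous op op inv.

Definition lcsc_group {G : Type} (op : (G -> Prop) -> Prop)
  (mul : G -> G -> G) (inv : G -> G) (one : G) : Prop :=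
  is_topological_group op mul inv one /\ hausdorff op /\
  locally_compact op /\ second_countable op.

Definition is_subgroup {G : Type} (mul : G -> G -> G) (inv : G -> G) (one : G)
  (H : G -> Prop) : Prop :=
  H one /\ (forall a b, H a -> H b -> H (mul a b)) /\ (forall a, H a -> H (inv a)).

Definition closed_subgroup {G : Type} (op : (G -> Prop) -> Prop)
  (mul : G -> G -> G) (inv : G -> G) (one : G) (H : G -> Prop) : Prop :=
  is_subgroup mul inv one H /\ closed op H.

Definition normalizer {G : Type} (mul : G -> G -> G) (inv : G -> G)
  (F : G -> Prop) (g : G) : Prop :=
  forall x, F x <-> F (mul (mul g x) (inv g)).

Definition setprod3 {G : Type} (mul : G -> G -> G) (A B C : G -> Prop) (g : G) : Prop :=
  exists a b c, A a /\ B b /\ C c /\ g = mul (mul a b) c.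

Definition is_action {G O : Type} (mul : G -> G -> G) (one : G) (act : G -> O -> O) : Prop :=
  (forall x, act one x = x) /\ (forall g h x, act (mul g h) x = act g (act h x)).

(* Omega is a homogeneous space of G, i.e. Omega is (homeomorphic, G-equivariantly, to)
   G/H for a closed subgroup H: a continuous transitive action such that for a base
   point x0 the orbit map g |-> g x0 is open and the stabilizer of x0 is closed. *)
Definition homogeneous_space {G O : Type} (opG : (G -> Prop) -> Prop)
  (mul : G -> G -> G) (one : G) (opO : (O -> Prop) -> Prop) (act : G -> O -> O) : Prop :=
  is_topology opO /\ is_action mul one act /\
  continuous (prod_open opG opO) opO (fun p => act (fst p) (snd p)) /\
  (forall x y, exists g, act g x = y) /\
  exists x0 : O,
    (forall U, opG U -> opO (fun y => exists g, U g /\ act g x0 = y)) /\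
    closed opG (fun g => act g x0 = x0).

Definition act_set {G O : Type} (act : G -> O -> O) (A : G -> Prop) (Y : O -> Prop) (z : O) : Prop :=
  exists a y, A a /\ Y y /\ z = act a y.

Definition translate {G O : Type} (act : G -> O -> O) (h : G) (Y : O -> Prop) (z : O) : Prop :=
  exists y, Y y /\ z = act h y.

Definition invariant {G O : Type} (act : G -> O -> O) (F : G -> Prop) (Y : O -> Prop) : Prop :=
  forall f y, F f -> Y y -> Y (act f y).

Definition minimal {G O : Type} (opO : (O -> Prop) -> Prop) (act : G -> O -> O)
  (F : G -> Prop) (Y : O -> Prop) : Prop :=
  closed opO Y /\ invariant act F Y /\
  (forall Z, closed opO Z -> invariant act F Z -> (exists z, Z z) -> subset Z Y ->
     set_eq Z Y).

(* Main.v *)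
Require Import Defs.
From Stdlib Require Import List Classical.

Lemma open_local {X : Type} (op : (X -> Prop) -> Prop) (A : X -> Prop) :
  is_topology op -> (forall x, A x -> exists U, op U /\ U x /\ subset U A) -> op A.
Proof.
  intros [ext [top [inter un]]] H.
  set (I := {S : X -> Prop | op S /\ subset S A}).
  apply ext with (fun x => exists i : I, proj1_sig i x).
  - intro x; split.
    + intros [[S [HS1 HS2]] Hx]. simpl in Hx. now apply HS2.
    + intros Ax. destruct (H x Ax) as [U [HU [Ux HsU]]].
      exists (exist _ U (conj HU HsU)). exact Ux.
  - apply un. intros [S [HS1 HS2]]; exact HS1.
Qed.

Lemma open_preimage {G O : Type} (opG : (G -> Prop) -> Prop) (opO : (O -> Prop) -> Prop)
  (act : G -> O -> O) (g : G) (V : O -> Prop) :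
  is_topology opO ->
  continuous (prod_open opG opO) opO (fun p => act (fst p) (snd p)) ->
  opO V -> opO (fun z => V (act g z)).
Proof.
  intros Ht Hc HV. apply open_local; auto.
  intros z Hz. specialize (Hc V HV (g, z) Hz).
  destruct Hc as [U [W [HU [HW [Ug [Wz Hq]]]]]].
  exists W; split; [exact HW|split; [exact Wz|]].
  intros w Ww. apply (Hq (g, w)); simpl; auto.
Qed.

Lemma open_list_inter {X I : Type} (op : (X -> Prop) -> Prop) (A : I -> X -> Prop) :
  is_topology op -> (forall i, op (A i)) ->
  forall l : list I, op (fun x => forall i, In i l -> A i x).
Proof.
  intros Ht HA. pose proof Ht as [ext [top [inter un]]].
  induction l as [|a l IH].
  - apply ext with (fun _ => True); [|exact top].
    intro x; split; auto. intros _ i Hi; destruct Hi.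
  - apply ext with (fun x => A a x /\ (forall i, In i l -> A i x)); [|now apply inter].
    intro x; split.
    + intros [H1 H2] i [<-|Hi]; auto.
    + intros H; split; [apply H; now left| intros i Hi; apply H; now right].
Qed.

Theorem corollary3p3
  (G : Type) (opG : (G -> Prop) -> Prop) (mul : G -> G -> G) (inv : G -> G) (one : G)
  (O : Type) (opO : (O -> Prop) -> Prop) (act : G -> O -> O)
  (F P M : G -> Prop) (Y : O -> Prop) (h : G) :
  lcsc_group opG mul inv one ->
  homogeneous_space opG mul one opO act ->
  closed_subgroup opG mul inv one F ->
  closed_subgroup opG mul inv one P ->
  subset F P ->
  compact opO Y ->
  minimal opO act F Y ->
  set_eq (act_set act P Y) Y ->
  (forall m, M m -> exists z, translate act m Y z /\ Y z) ->
  normalizer mul inv F h ->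
  closure opG (setprod3 mul P M P) h ->
  set_eq (translate act h Y) Y.
Proof.
  intros [[HtG [Hgrp _]] _] [HtO [[Hact1 Hact2] [Hcont _]]] HF [[P1 [P2 P3]] _] _ Hcomp
    [HYc [HYinv HYmin]] HPY HM HN Hcl.
  destruct Hgrp as [assoc [mul1l [mul1r [mulVl mulVr]]]].
  pose proof HtO as [extO [topO [interO unO]]].
  assert (actK : forall g y, act (inv g) (act g y) = y).
  { intros g y. rewrite <- Hact2, mulVl. apply Hact1. }
  assert (actK' : forall g y, act g (act (inv g) y) = y).
  { intros g y. rewrite <- Hact2, mulVr. apply Hact1. }
  assert (PYsub : forall p y, P p -> Y y -> Y (act p y)).
  { intros p y Hp Hy. apply HPY. exists p, y; auto. }
  assert (Key : forall g, (forall f, F f -> F (mul (mul g f) (inv g))) ->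
             (exists y, Y y /\ Y (act g y)) -> forall z, Y z -> Y (act g z)).
  { intros g Hg Hne z Hz.
    assert (Hc : closed opO (fun z => Y z /\ Y (act g z))).
    { unfold closed. apply open_local; auto.
      intros x Hx. apply not_and_or in Hx. destruct Hx as [Hx|Hx].
      - exists (fun z => ~ Y z); split; [exact HYc|split; auto].
        intros w Hw Hw'; apply Hw, Hw'.
      - exists (fun z => ~ Y (act g z)); split.
        + apply (open_preimage opG opO act g (fun z => ~ Y z)); auto.
        + split; auto. intros w Hw Hw'; apply Hw, Hw'. }
    assert (Hi : invariant act F (fun z => Y z /\ Y (act g z))).
    { intros f y Hf [Hy1 Hy2]. split; [now apply HYinv|].
      assert (E : act g (act f y) = act (mul (mul g f) (inv g)) (act g y)).
      { rewrite <- !Hact2. f_equal.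
        rewrite <- (assoc (mul g f)), mulVl, mul1r. reflexivity. }
      rewrite E. apply HYinv; auto. }
    assert (Hs : subset (fun z => Y z /\ Y (act g z)) Y) by (intros x [Hx _]; exact Hx).
    destruct Hne as [y0 Hy0].
    pose proof (HYmin _ Hc Hi (ex_intro _ y0 Hy0) Hs z) as [_ H].
    exact (proj2 (H Hz)). }
  assert (Hne : exists y, Y y /\ Y (act h y)).
  { apply NNPP; intro Hno.
    set (I := {p : (G -> Prop) * (O -> Prop) | opG (fst p) /\ opO (snd p) /\ fst p h /\
                 (forall g y, fst p g -> snd p y -> ~ Y (act g y))}).
    destruct (Hcomp I (fun i => snd (proj1_sig i))) as [l Hl].
    - intro i; exact (proj1 (proj2 (proj2_sig i))).
    - intros y Hy.
      assert (HW : prod_open opG opO (fun p => ~ Y (act (fst p) (snd p)))).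
      { exact (Hcont (fun z => ~ Y z) HYc). }
      destruct (HW (h, y)) as [U [V [HU [HV [Uh [Vy Hq]]]]]].
      { simpl. intro Hhy. apply Hno. exists y; auto. }
      exists (exist _ (U, V) (conj HU (conj HV (conj Uh
        (fun g y' (Hg : U g) (Hy' : V y') => Hq (g, y') Hg Hy'))))).
      exact Vy.
    - assert (HUo := open_list_inter opG (fun i : I => fst (proj1_sig i)) HtG
                       (fun i => proj1 (proj2_sig i)) l).
      destruct (Hcl _ HUo) as [g [Hg [p [m [p' [Hp [Hm [Hp' Eg]]]]]]]].
      { intros i _. exact (proj1 (proj2 (proj2 (proj2_sig i)))). }
      destruct (HM m Hm) as [z [[y0 [Hy0 Ez]] Hz]].
      set (y' := act (inv p') y0).
      assert (Hy' : Y y') by (apply PYsub; auto).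
      destruct (Hl y' Hy') as [i [Hin Hiy]].
      apply (proj2 (proj2 (proj2 (proj2_sig i))) g y' (Hg i Hin) Hiy).
      rewrite Eg; unfold y'. rewrite !Hact2, actK'. apply PYsub; auto. congruence. }
  assert (H1 : forall z, Y z -> Y (act h z)).
  { apply Key; auto. intros f Hf. exact (proj1 (HN f) Hf). }
  assert (H2 : forall z, Y z -> Y (act (inv h) z)).
  { apply Key.
    - intros f Hf. apply (proj2 (HN _)).
      replace (mul (mul h (mul (mul (inv h) f) (inv (inv h)))) (inv h)) with f; auto.
      assert (Ei : inv (inv h) = h).
      { rewrite <- (mul1l (inv (inv h))), <- (mulVr h), <- assoc, mulVr, mul1r. reflexivity. }
      rewrite Ei. rewrite !assoc, mulVr, mul1l, <- assoc, mulVr, mul1r. reflexivity.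
    - destruct Hne as [y [Hy Hhy]]. exists (act h y). rewrite actK. auto. }
  intro z; split.
  - intros [y [Hy ->]]. auto.
  - intros Hz. exists (act (inv h) z). split; auto.
Qed.
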